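(* Let $C_3$ be a positive constant. The following are equivalent: (i) For every positive integer $N$, every strictly increasing real sequence $(\lambda_k)_{k=-\infty}^\infty$, with $\delta_k:=\min\{\lambda_k-\lambda_{k-1},\lambda_{k+1}-\lambda_k\}$, and all nonnegative reals $t_1,\dots,t_N$, $$\sum_{m=1}^N\sum_{\substack{n=1\\ n\ne m}}^N\frac{\delta_m^{3/2}\delta_n^{1/2}t_mt_n}{(\lambda_m-\lambda_n)^2}\le C_3\sum_{n=1}^N t_n^2.$$ (ii) For every positive integer $M$, all real numbers $x_1,\dots,x_M$ distinct modulo $1$, and all nonnegative reals $\tau_1,\dots,\tau_M$, $$\frac13\sum_{m=1}^M d_m^2\tau_m^2+\sum_{m=1}^M\sum_{\substack{n=1\\ n\ne m}}^M\frac{d_m^{3/2}d_n^{1/2}\tau_m\tau_n}{\sin^2(\pi(x_m-x_n))}\le\frac{C_3}{\pi^2}\sum_{m=1}^M\tau_m^2,$$ where $d_m:=\min_{n\ne m}\|x_n-x_m\|$ (and $d_1:=1$ if $M=1$).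
   Context: $\|x\|=\min_{k\in\mathbb Z}|x-k|$ denotes the distance from the real number $x$ to a nearest integer. *)

(* Defs.v *)
From Stdlib Require Import Reals Lra Lia ZArith Arith.
Open Scope R_scope.

Fixpoint sum1 (n : nat) (f : nat -> R) : R :=
  match n with
  | O => 0
  | S k => sum1 k f + f (S k)
  end.

(* ||x|| = distance from x to a nearest integer = min_{k in Z} |x - k|.
   With frac_part x = x - floor x in [0,1), this minimum is
   min (frac x) (1 - frac x). *)
Definition nint_dist (x : R) : R := Rmin (frac_part x) (1 - frac_part x).

Definition delta (lam : Z -> R) (k : Z) : R :=
  Rmin (lam k - lam (k - 1)%Z) (lam (k + 1)%Z - lam k).

(* d_m = min_{1<=n<=M, n<>m} ||x_n - x_m||, and 1 if there is no such n.
   Computed as min(1, ...), which agrees since ||.|| <= 1/2. *)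
Fixpoint dmin_aux (x : nat -> R) (m : nat) (k : nat) : R :=
  match k with
  | O => 1
  | S j => if Nat.eqb (S j) m then dmin_aux x m j
           else Rmin (dmin_aux x m j) (nint_dist (x (S j) - x m))
  end.

Definition dmin (M : nat) (x : nat -> R) (m : nat) : R := dmin_aux x m M.

(* Main.v *)
Require Import Defs.
From Stdlib Require Import Reals ZArith Arith.
From Stdlib Require Import Lra Lia Psatz.
Open Scope R_scope.
From HB Require Import structures.
From mathcomp Require ssreflect ssrbool ssrfun eqtype ssrnat seq path bigop.
From mathcomp Require zify.

Fixpoint sum0 (n : nat) (f : nat -> R) : R :=
  match n with O => 0 | S k => sum0 k f + f k end.

Lemma sum1_sum0 n f : sum1 n f = sum0 n (fun i => f (S i)).
Proof. induction n; simpl; [reflexivity| rewrite IHn; reflexivity]. Qed.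

Lemma sum0_ext n f g : (forall i, (i < n)%nat -> f i = g i) -> sum0 n f = sum0 n g.
Proof. induction n; intros H; simpl; [reflexivity|]. rewrite IHn by (intros; apply H; lia). rewrite H by lia. reflexivity. Qed.

Lemma sum0_le n f g : (forall i, (i < n)%nat -> f i <= g i) -> sum0 n f <= sum0 n g.
Proof. induction n; intros H; simpl; [lra|]. assert (sum0 n f <= sum0 n g) by (apply IHn; intros; apply H; lia). specialize (H n ltac:(lia)). lra. Qed.

Lemma sum0_nonneg n f : (forall i, (i < n)%nat -> 0 <= f i) -> 0 <= sum0 n f.
Proof. intros H. replace 0 with (sum0 n (fun _ => 0)). apply sum0_le; auto. clear H; induction n; simpl; lra. Qed.

Lemma sum0_plus n f g : sum0 n (fun i => f i + g i) = sum0 n f + sum0 n g.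
Proof. induction n; simpl; lra. Qed.

Lemma sum0_scal n c f : sum0 n (fun i => c * f i) = c * sum0 n f.
Proof. induction n; simpl; [ring|rewrite IHn; ring]. Qed.

Lemma sum0_opp n f : sum0 n (fun i => - f i) = - sum0 n f.
Proof. induction n; simpl; [ring|rewrite IHn; ring]. Qed.

Lemma sum0_const n c : sum0 n (fun _ => c) = INR n * c.
Proof. induction n; simpl sum0; [simpl; ring|]. rewrite IHn, S_INR; ring. Qed.

Lemma sum0_add a b f : sum0 (a + b) f = sum0 a f + sum0 b (fun i => f (a + i)%nat).
Proof. induction b; simpl. rewrite Nat.add_0_r; ring. rewrite Nat.add_succ_r; simpl; rewrite IHb; ring. Qed.

Lemma sum0_swap n m f : sum0 n (fun i => sum0 m (fun j => f i j)) = sum0 m (fun j => sum0 n (fun i => f i j)).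
Proof. induction n; simpl. induction m; simpl; [ring| rewrite <- IHm; ring].
 rewrite IHn. rewrite <- sum0_plus. reflexivity. Qed.

Lemma sum0_mono_n a b f : (a <= b)%nat -> (forall i, (i < b)%nat -> 0 <= f i) -> sum0 a f <= sum0 b f.
Proof. intros Hab H. replace b with (a + (b - a))%nat by lia. rewrite sum0_add.
 assert (0 <= sum0 (b - a) (fun i => f (a + i)%nat)) by (apply sum0_nonneg; intros; apply H; lia). lra. Qed.

Lemma sum0_shift1 n f : sum0 (S n) f = f O + sum0 n (fun i => f (S i)).
Proof. induction n; simpl in *. ring. rewrite IHn. ring. Qed.

Lemma sum0_rev n f : sum0 n (fun i => f (n - 1 - i)%nat) = sum0 n f.
Proof. revert f; induction n; intros f; simpl. reflexivity.
 rewrite (sum0_ext n (fun i => f (n - 0 - i)%nat) (fun i => f (S (n - 1 - i)))) by (intros; f_equal; lia).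
 pose proof (IHn (fun j => f (S j))) as E. cbv beta in E. rewrite E.
 replace (n - 0 - n)%nat with O by lia. change (sum0 n f + f n) with (sum0 (S n) f). rewrite (sum0_shift1 n f). ring. Qed.

Lemma sum0_blocks K M g : sum0 (K * M) g = sum0 K (fun a => sum0 M (fun k => g (a * M + k)%nat)).
Proof. induction K; simpl. reflexivity. rewrite Nat.add_comm, sum0_add, IHK. reflexivity. Qed.

Lemma sum0_spike n m c f : (m < n)%nat ->
  sum0 n (fun i => if Nat.eqb i m then c else f i) = c + sum0 n (fun i => if Nat.eqb i m then 0 else f i).
Proof. induction n; intros H; simpl. lia.
 destruct (Nat.eq_dec m n). subst. rewrite Nat.eqb_refl.
 rewrite !(sum0_ext n (fun i => if Nat.eqb i n then _ else f i) f) by (intros i Hi; destruct (Nat.eqb_spec i n); [lia|reflexivity]). ring.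
 rewrite IHn by lia. destruct (Nat.eqb_spec n m); [lia|]. ring. Qed.
Lemma sin_cubic a : 0 <= a -> a <= 4 -> a - a^3/6 <= sin a.
Proof. intros. pose proof (pre_sin_bound a 0 H H0) as [H1 _]. unfold sin_approx, sin_term in H1. simpl in H1. lra. Qed.

Lemma poly_aux s : 0 <= s -> s <= 4 -> 1 <= (1 - s/6)^2 * (1 + 3 * s).
Proof. intros. assert (0 <= 8/3 - 35 * s/36 + s^2/12) by nra.
assert (0 <= s * (8/3 - 35 * s/36 + s^2/12)) by (apply Rmult_le_pos; lra). nra.
Qed.

Lemma csc_base t : 0 < t -> t <= PI / 2 -> 1 / (sin t)^2 <= 1 / t^2 + 3.
Proof. intros H1 H2. pose proof PI_4. assert (t <= 2) by lra.
 pose proof (sin_cubic t ltac:(lra) ltac:(lra)) as Hs.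
 set (q := 1 - t^2/6). assert (Hq1 : 1/3 <= q) by (unfold q; nra). assert (q <= 1) by (unfold q; nra).
 assert (Hsq : t * q <= sin t) by (unfold q; nra).
 assert (Hpos : 0 < t * q) by nra.
 assert (Hk : 1 <= q^2 * (1 + 3 * t^2)) by (unfold q; replace (t^3) with (t^2*t) by ring; apply poly_aux; nra).
 assert (Hss : (t*q)^2 <= (sin t)^2) by nra.
 assert (0 < sin t) by lra.
 assert (Hm : t^2 <= (sin t)^2 * (1 + 3 * t^2)).
 { assert (t^2 * 1 <= t^2 * (q^2 * (1 + 3 * t^2))) by (apply Rmult_le_compat_l; nra). nra. }
 assert (E : 1 / t^2 + 3 - 1/(sin t)^2 = ((sin t)^2 * (1 + 3 * t^2) - t^2) / ((sin t)^2 * t^2)) by (field; lra).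
 assert (0 <= ((sin t)^2 * (1 + 3 * t^2) - t^2) / ((sin t)^2 * t^2)). { apply Rle_mult_inv_pos. lra. apply Rmult_lt_0_compat; apply pow_lt; lra. }
 lra. Qed.

Lemma csc_bound th : 0 < th -> th < PI -> 1 / (sin th)^2 <= 1 / th^2 + 1 / (PI - th)^2 + 3.
Proof. intros H1 H2. destruct (Rle_dec th (PI/2)).
 - pose proof (csc_base th H1 r). assert (0 <= 1/(PI-th)^2). { apply Rlt_le, Rdiv_lt_0_compat; [lra| apply pow_lt; lra]. } lra.
 - rewrite <- sin_PI_x. pose proof (csc_base (PI - th) ltac:(lra) ltac:(lra)).
   assert (0 <= 1/th^2). { apply Rlt_le, Rdiv_lt_0_compat; [lra| apply pow_lt; lra]. } lra. Qed.

Lemma csc_dup z : sin z <> 0 -> 4 / (sin z)^2 = 1 / (sin (z/2))^2 + 1 / (sin ((z + PI)/2))^2.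
Proof. intros H.
 replace ((z + PI)/2) with (z/2 + PI/2) by field. rewrite sin_plus, sin_PI2, cos_PI2.
 replace z with (2 * (z/2)) in H |- * by field. rewrite sin_2a in H |- *.
 pose proof (sin2_cos2 (z/2)) as E. unfold Rsqr in E.
 replace (2 * (z/2) / 2) with (z/2) by field.
 assert (sin (z/2) <> 0) by (intro E'; apply H; rewrite E'; ring).
 assert (cos (z/2) <> 0) by (intro E'; apply H; rewrite E'; ring).
 field_simplify; auto. replace (sin (z / 2) ^ 2 + cos (z / 2) ^ 2) with 1 by (rewrite <- E; ring). field; auto. Qed.

Lemma sin_shift_nz p x k : sin x <> 0 -> sin ((x + INR k * PI) / 2^p) <> 0.
Proof. intros H Z. apply sin_eq_0_0 in Z. destruct Z as [m Hm]. apply H. apply sin_eq_0_1.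
 exists (m * 2^(Z.of_nat p) - Z.of_nat k)%Z. rewrite minus_IZR, mult_IZR, <- pow_IZR, <- INR_IZR_INZ.
 assert (0 < 2^p) by (apply pow_lt; lra).
 apply (Rmult_eq_compat_r (2^p)) in Hm. field_simplify in Hm; [|lra]. simpl in Hm. lra. Qed.

Lemma csc_id p x : sin x <> 0 ->
  4^p / (sin x)^2 = sum0 (2^p)%nat (fun k => 1 / (sin ((x + INR k * PI) / 2^p))^2).
Proof. intros Hx. induction p.
 - simpl. replace ((x + 0 * PI)/1) with x by field. field. auto.
 - change (4^(S p)) with (4 * 4^p). unfold Rdiv at 1. rewrite Rmult_assoc. fold (Rdiv (4^p) ((sin x)^2)).
   rewrite IHp, <- sum0_scal.
   rewrite (sum0_ext _ _ (fun k => 1 / (sin ((x + INR k * PI) / 2^(S p)))^2 +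
                                   1 / (sin ((x + INR (2^p + k)%nat * PI) / 2^(S p)))^2)).
   + rewrite sum0_plus. replace (2^(S p))%nat with (2^p + 2^p)%nat by (simpl; lia). rewrite sum0_add. reflexivity.
   + intros k _. pose proof (sin_shift_nz p x k Hx) as Hn.
     replace (4 * (1 / (sin ((x + INR k * PI) / 2^p))^2)) with (4 / (sin ((x + INR k * PI) / 2^p))^2) by (field; auto).
     rewrite csc_dup by auto. assert (0 < 2^p) by (apply pow_lt; lra).
     rewrite plus_INR, pow_INR. simpl INR.
     replace ((x + INR k * PI) / 2 ^ p / 2) with ((x + INR k * PI) / 2 ^ S p) by (simpl; field; lra).
     replace (((x + INR k * PI) / 2 ^ p + PI) / 2) with ((x + ((1 + 1) ^ p + INR k) * PI) / 2 ^ S p).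
     reflexivity. replace (1+1) with 2 by ring. simpl; field; lra. Qed.

Lemma term_bound N u k : 0 < u -> 0 <= k -> u + k < N ->
  PI^2 / N^2 * (1 / (sin ((PI * u + k * PI) / N))^2) <=
  1 / (u + k)^2 + 1 / (u - (N - k))^2 + 3 * PI^2 / N^2.
Proof. intros Hu Hk HN. pose proof PI_RGT_0 as HP.
 set (th := (PI * u + k * PI) / N).
 assert (0 <= k * PI) by (apply Rmult_le_pos; lra). assert (0 < PI * u) by (apply Rmult_lt_0_compat; lra).
 assert (Hth : 0 < th < PI). { unfold th; split. apply Rdiv_lt_0_compat; lra.
   apply (Rmult_lt_reg_r N); [lra|]. field_simplify; nra. }
 pose proof (csc_bound th (proj1 Hth) (proj2 Hth)) as B.
 assert (0 < PI^2/N^2) by (apply Rdiv_lt_0_compat; apply pow_lt; lra).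
 apply (Rmult_le_compat_l (PI^2/N^2)) in B; [|lra].
 assert (E1 : PI^2/N^2 * (1/th^2) = 1/(u+k)^2) by (unfold th; field; split; lra).
 assert (E2 : PI^2/N^2 * (1/(PI - th)^2) = 1/(u - (N - k))^2).
 { unfold th. replace (PI - (PI * u + k * PI) / N) with (PI * (N - u - k) / N) by (field; lra).
   replace (u - (N - k)) with (- (N - u - k)) by ring. field. split; lra. }
 rewrite !Rmult_plus_distr_l, E1, E2 in B. lra. Qed.

Lemma cross_bound p u : 0 < u < 1 ->
  PI^2 / (sin (PI * u))^2 <=
  sum0 (2^p)%nat (fun j => 1 / (u + INR j)^2) + sum0 (2^p)%nat (fun j => 1 / (u - INR (S j))^2)
  + 3 * PI^2 / 2^p.
Proof. intros Hu. pose proof PI_RGT_0 as HP.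
 assert (Hs : 0 < sin (PI * u)) by (apply sin_gt_0; nra).
 pose proof (csc_id p (PI * u) ltac:(lra)) as E.
 assert (HN : INR (2^p)%nat = 2^p) by (rewrite pow_INR; reflexivity).
 assert (H2 : 0 < 2^p) by (apply pow_lt; lra).
 assert (H4 : 4^p = (2^p)^2) by (replace 4 with (2*2) by ring; rewrite Rpow_mult_distr; ring).
 replace (PI^2 / (sin (PI * u))^2) with (PI^2/(2^p)^2 * (4^p / (sin (PI * u))^2)) by (rewrite H4; field; lra).
 rewrite E, <- sum0_scal.
 eapply Rle_trans.
 { apply sum0_le. intros k Hk. apply (term_bound (2^p) u (INR k)). lra. apply pos_INR.
   assert (INR (S k) <= 2^p) by (rewrite <- HN; apply le_INR; lia). rewrite S_INR in *. lra. }
 rewrite !sum0_plus, sum0_const, HN.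
 rewrite <- (sum0_rev _ (fun j => 1 / (u - INR (S j))^2)).
 rewrite (sum0_ext _ (fun j => 1 / (u - INR (S (2^p - 1 - j)))^2) (fun i => 1 / (u - (2^p - INR i))^2)).
 - right. field. lra.
 - intros k Hk. rewrite <- HN. rewrite <- minus_INR by lia. f_equal. f_equal. f_equal. f_equal. lia.
Qed.

Lemma sum0_even_odd n f : sum0 (2 * n) f = sum0 n (fun j => f (2 * j)%nat) + sum0 n (fun j => f (S (2 * j))).
Proof. induction n. simpl; ring. replace (2 * S n)%nat with (S (S (2 * n))) by lia. change (sum0 (S (S (2 * n))) f) with (sum0 (2 * n) f + f (2 * n)%nat + f (S (2 * n))). rewrite IHn. cbn [sum0]. ring. Qed.

Lemma O_bound q : PI^2/8 - 3 * PI^2 / (8 * 2^q) <= sum0 (2^q)%nat (fun j => 1 / (INR (S (2 * j)))^2).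
Proof. pose proof (cross_bound q (1/2) ltac:(lra)) as B.
 replace (PI * (1/2)) with (PI/2) in B by field. rewrite sin_PI2 in B.
 rewrite (sum0_ext _ (fun j => 1 / (1/2 + INR j)^2) (fun j => 4 * (1 / (INR (S (2 * j)))^2))) in B.
 2:{ intros j _. rewrite S_INR, mult_INR. simpl INR. pose proof (pos_INR j). field. lra. }
 rewrite (sum0_ext _ (fun j => 1 / (1/2 - INR (S j))^2) (fun j => 4 * (1 / (INR (S (2 * j)))^2))) in B.
 2:{ intros j _. rewrite !S_INR, mult_INR. simpl INR. pose proof (pos_INR j). field. lra. }
 rewrite !sum0_scal in B. assert (0 < 2^q) by (apply pow_lt; lra).
 replace (3 * PI^2 / (8 * 2^q)) with ((3 * PI^2 / 2^q)/8) by (field; lra). lra. Qed.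

Lemma E_bound q : PI^2/6 - 3 * PI^2 / 2 / 2^q <= sum0 (2^q)%nat (fun j => 1 / (INR (S j))^2).
Proof. induction q.
 - simpl. pose proof PI_4. pose proof PI_RGT_0. replace (1 / (1 * 1)) with 1 by field. nra.
 - replace (2^(S q))%nat with (2 * 2^q)%nat by (simpl; lia). rewrite sum0_even_odd.
   rewrite (sum0_ext _ (fun j => 1 / INR (S (S (2 * j)))^2) (fun j => /4 * (1 / (INR (S j))^2))).
   2:{ intros j _. rewrite !S_INR, mult_INR. simpl INR. pose proof (pos_INR j). field. lra. }
   rewrite sum0_scal. pose proof (O_bound q). assert (0 < 2^q) by (apply pow_lt; lra).
   replace (3 * PI^2 / 2 / 2^(S q)) with ((3 * PI^2/2^q)/4) by (simpl; field; lra).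
   replace (3 * PI^2 / (8 * 2^q)) with ((3 * PI^2/2^q)/8) in H by (field; lra).
   replace (3 * PI^2 / 2 / 2^q) with ((3 * PI^2/2^q)/2) in IHq by (field; lra). lra. Qed.

Lemma sum0_revZ K (h : Z -> R) :
  sum0 K (fun b => h (Z.of_nat K - Z.of_nat b)%Z) = sum0 K (fun j => h (Z.of_nat (S j))).
Proof. rewrite <- sum0_rev. apply sum0_ext. intros i Hi. f_equal. lia. Qed.

Lemma sum0_revZ' K (h : Z -> R) :
  sum0 K (fun a => h (Z.of_nat a - Z.of_nat K)%Z) = sum0 K (fun j => h (- Z.of_nat (S j))%Z).
Proof. rewrite <- sum0_rev. apply sum0_ext. intros i Hi. f_equal. lia. Qed.

Lemma square_bound (h : Z -> R) (Hh : forall z, 0 <= h z) J K :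
  INR (K - J) * (h 0%Z + sum0 J (fun j => h (Z.of_nat (S j)))
                 + sum0 J (fun j => h (- Z.of_nat (S j))%Z))
  <= sum0 K (fun a => sum0 K (fun b => h (Z.of_nat a - Z.of_nat b)%Z)).
Proof. induction K.
 - simpl. lra.
 - assert (E : sum0 (S K) (fun a => sum0 (S K) (fun b => h (Z.of_nat a - Z.of_nat b)%Z)) =
     sum0 K (fun a => sum0 K (fun b => h (Z.of_nat a - Z.of_nat b)%Z))
     + sum0 K (fun a => h (Z.of_nat a - Z.of_nat K)%Z)
     + sum0 K (fun b => h (Z.of_nat K - Z.of_nat b)%Z) + h 0%Z).
   { simpl sum0 at 1. simpl sum0 at 2. rewrite sum0_plus.
     replace (Z.of_nat K - Z.of_nat K)%Z with 0%Z by lia. ring. }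
   rewrite E, sum0_revZ, sum0_revZ'.
   assert (HP : 0 <= sum0 K (fun a => sum0 K (fun b => h (Z.of_nat a - Z.of_nat b)%Z))).
   { apply sum0_nonneg; intros; apply sum0_nonneg; intros; apply Hh. }
   assert (0 <= sum0 K (fun j => h (Z.of_nat (S j)))) by (apply sum0_nonneg; intros; apply Hh).
   assert (0 <= sum0 K (fun j => h (- Z.of_nat (S j))%Z)) by (apply sum0_nonneg; intros; apply Hh).
   pose proof (Hh 0%Z).
   destruct (le_lt_dec J K) as [HJ|HJ].
   + replace (S K - J)%nat with (S (K - J)) by lia. rewrite S_INR.
     assert (sum0 J (fun j => h (Z.of_nat (S j))) <= sum0 K (fun j => h (Z.of_nat (S j)))) by (apply sum0_mono_n; auto).
     assert (sum0 J (fun j => h (- Z.of_nat (S j))%Z) <= sum0 K (fun j => h (- Z.of_nat (S j))%Z)) by (apply sum0_mono_n; auto).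
     lra.
   + replace (S K - J)%nat with O by lia. simpl INR. lra. Qed.

Lemma frac_shift u k : frac_part (u + IZR k) = frac_part u.
Proof. symmetry. apply (Int_part_frac_part_spec (u + IZR k) (Int_part u + k)%Z (frac_part u)).
 pose proof (base_fp u). lra. rewrite plus_IZR. pose proof (Rplus_Int_part_frac_part u). lra. Qed.

Lemma nint_dist_shift u k : nint_dist (u + IZR k) = nint_dist u.
Proof. unfold nint_dist. rewrite frac_shift. reflexivity. Qed.

Lemma nint_dist_nonneg u : 0 <= nint_dist u.
Proof. unfold nint_dist. pose proof (base_fp u). apply Rmin_glb; lra. Qed.

Lemma nint_dist_le_abs u : nint_dist u <= Rabs u.
Proof. unfold nint_dist, frac_part. pose proof (base_Int_part u) as [H1 H2].
 destruct (Rle_dec 0 u).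
 - assert (-1 < Int_part u)%Z by (apply lt_IZR; lra). assert (0 <= IZR (Int_part u)) by (apply IZR_le; lia).
   rewrite Rabs_right by lra. apply Rle_trans with (u - IZR (Int_part u)). apply Rmin_l. lra.
 - assert (Int_part u < 0)%Z by (apply lt_IZR; simpl; lra). assert (IZR (Int_part u) <= -1) by (apply IZR_le; lia).
   rewrite Rabs_left by lra. apply Rle_trans with (1 - (u - IZR (Int_part u))). apply Rmin_r. lra. Qed.

Lemma nint_dist_le_shift u k : nint_dist u <= Rabs (u + IZR k).
Proof. rewrite <- (nint_dist_shift u k). apply nint_dist_le_abs. Qed.

Lemma nint_dist_small u : Rabs u < 1/2 -> nint_dist u = Rabs u.
Proof. intros H. unfold nint_dist. destruct (Rle_dec 0 u).
 - assert (E : frac_part u = u). { symmetry. apply (Int_part_frac_part_spec u 0%Z u). rewrite Rabs_right in H; lra. simpl; ring. }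
   rewrite E, Rabs_right in * by lra. apply Rmin_left. lra.
 - assert (E : frac_part u = u + 1). { symmetry. apply (Int_part_frac_part_spec u (-1)%Z (u+1)). rewrite Rabs_left in H; lra. simpl; ring. }
   rewrite E, Rabs_left in * by lra. rewrite Rmin_right; lra. Qed.

Lemma dmin_le_1 x m k : dmin_aux x m k <= 1.
Proof. induction k; cbn [dmin_aux]. lra. destruct (Nat.eqb (S k) m). auto. apply Rle_trans with (dmin_aux x m k); auto. apply Rmin_l. Qed.

Lemma dmin_le x m k n : (1 <= n <= k)%nat -> n <> m -> dmin_aux x m k <= nint_dist (x n - x m).
Proof. induction k; intros Hn Hnm. lia. cbn [dmin_aux]. destruct (Nat.eqb_spec (S k) m).
 - apply IHk; lia.
 - destruct (Nat.eq_dec n (S k)). subst. apply Rmin_r. apply Rle_trans with (dmin_aux x m k). apply Rmin_l. apply IHk; lia. Qed.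

Lemma dmin_ge x m k c : c <= 1 -> (forall n, (1 <= n <= k)%nat -> n <> m -> c <= nint_dist (x n - x m)) -> c <= dmin_aux x m k.
Proof. induction k; intros Hc H; cbn [dmin_aux]. auto. destruct (Nat.eqb_spec (S k) m).
 - apply IHk; auto. intros; apply H; lia.
 - apply Rmin_glb. apply IHk; auto; intros; apply H; lia. apply H; lia. Qed.

Lemma dmin_nonneg M x m : 0 <= dmin M x m.
Proof. apply dmin_ge. lra. intros; apply nint_dist_nonneg. Qed.

Lemma sum1_ext n f g : (forall i, (1 <= i <= n)%nat -> f i = g i) -> sum1 n f = sum1 n g.
Proof. intros H. rewrite !sum1_sum0. apply sum0_ext. intros; apply H; lia. Qed.
Lemma sum1_le n f g : (forall i, (1 <= i <= n)%nat -> f i <= g i) -> sum1 n f <= sum1 n g.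
Proof. intros H. rewrite !sum1_sum0. apply sum0_le. intros; apply H; lia. Qed.
Lemma sum1_nonneg n f : (forall i, (1 <= i <= n)%nat -> 0 <= f i) -> 0 <= sum1 n f.
Proof. intros H. rewrite !sum1_sum0. apply sum0_nonneg. intros; apply H; lia. Qed.
Lemma sum1_scal n c f : sum1 n (fun i => c * f i) = c * sum1 n f.
Proof. rewrite !sum1_sum0. apply sum0_scal. Qed.
Lemma sum1_zero n f : (forall i, (1 <= i <= n)%nat -> f i = 0) -> sum1 n f = 0.
Proof. intros H. rewrite (sum1_ext n f (fun _ => 0)) by auto. rewrite sum1_sum0, sum0_const. ring. Qed.
Lemma sum1_SS n f : sum1 (S (S n)) f = sum1 n f + f (S n) + f (S (S n)).
Proof. reflexivity. Qed.

Lemma sin_sq_le y : (sin y)^2 <= y^2.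
Proof. assert (forall y, 0 < y -> (sin y)^2 <= y^2).
 { intros z Hz. pose proof (sin_lt_x z Hz). pose proof (SIN_bound z). pose proof PI_RGT_0.
   destruct (Rle_dec z PI). assert (0 <= sin z) by (apply sin_ge_0; lra). nra.
   pose proof (PI2_1). nra. }
 destruct (Rtotal_order y 0) as [Hy|[Hy|Hy]].
 - replace y with (- - y) by ring. rewrite sin_neg. specialize (H (-y) ltac:(lra)). nra.
 - subst. rewrite sin_0. lra.
 - auto. Qed.

Lemma lam_mono (lam : Z -> R) : (forall k, lam k < lam (k + 1)%Z) -> forall a b, (a < b)%Z -> lam a < lam b.
Proof. intros H a b Hab. replace b with (a + Z.of_nat (S (Z.to_nat (b - a - 1))))%Z by lia.
 generalize (Z.to_nat (b - a - 1)). intros n. induction n.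
 - simpl. apply H.
 - apply Rlt_trans with (1 := IHn). replace (a + Z.of_nat (S (S n)))%Z with ((a + Z.of_nat (S n)) + 1)%Z by lia. apply H. Qed.

Lemma lam_le (lam : Z -> R) : (forall k, lam k < lam (k + 1)%Z) -> forall a b, (a <= b)%Z -> lam a <= lam b.
Proof. intros H a b Hab. destruct (Z.eq_dec a b). subst; lra. apply Rlt_le, lam_mono; auto; lia. Qed.

Lemma term_cmp e dm dn Dm Dn tm tn D S : 0 < e -> 0 <= Dm -> 0 <= Dn -> e * Dm <= dm -> e * Dn <= dn ->
  0 <= tm -> 0 <= tn -> D <> 0 -> 0 < S -> S <= (PI * (e * D))^2 ->
  Dm * sqrt Dm * sqrt Dn * tm * tn / D^2 / PI^2 <= dm * sqrt dm * sqrt dn * tm * tn / S.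
Proof. intros He HDm HDn Hm Hn Htm Htn HD HS HSb. pose proof PI_RGT_0.
 set (A := Dm * sqrt Dm * sqrt Dn * tm * tn).
 assert (HA : 0 <= A) by (unfold A; repeat apply Rmult_le_pos; auto; apply sqrt_pos).
 assert (HB : e^2 * A <= dm * sqrt dm * sqrt dn * tm * tn).
 { unfold A. assert (sqrt (e * Dm) <= sqrt dm) by (apply sqrt_le_1_alt; auto).
   assert (sqrt (e * Dn) <= sqrt dn) by (apply sqrt_le_1_alt; auto).
   rewrite sqrt_mult_alt in * by lra.
   assert (Hee : sqrt e * sqrt e = e) by (apply sqrt_sqrt; lra).
   pose proof (sqrt_pos e). pose proof (sqrt_pos Dm). pose proof (sqrt_pos Dn).
   replace (e^2 * (Dm * sqrt Dm * sqrt Dn * tm * tn)) with ((e * Dm) * (sqrt e * sqrt Dm) * (sqrt e * sqrt Dn) * tm * tn)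
     by (replace ((e * Dm) * (sqrt e * sqrt Dm) * (sqrt e * sqrt Dn) * tm * tn) with (e * Dm * (sqrt e * sqrt e) * sqrt Dm * sqrt Dn * tm * tn) by ring; rewrite Hee; ring).
   apply Rmult_le_compat_r; auto. apply Rmult_le_compat_r; auto.
   apply Rmult_le_compat; auto. apply Rmult_le_pos; [apply Rmult_le_pos|]; nra. apply Rmult_le_pos; auto.
   apply Rmult_le_compat; auto. nra. apply Rmult_le_pos; auto. }
 assert (HD2 : 0 < D^2) by nra.
 apply Rle_trans with (e^2 * A / S).
 - apply Rle_trans with (e^2 * A / (PI * (e * D))^2).
   + right. field. repeat split; lra.
   + apply Rmult_le_compat_l. apply Rmult_le_pos; [apply pow_le; lra|auto].
     apply Rinv_le_contravar; auto.
 - apply Rmult_le_compat_r; auto. apply Rlt_le, Rinv_0_lt_compat; auto. Qed.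

Definition CondI (C3 : R) : Prop :=
  forall (N : nat) (lam : Z -> R) (t : nat -> R),
      (1 <= N)%nat ->
      (forall k : Z, lam k < lam (k + 1)%Z) ->
      (forall n : nat, (1 <= n <= N)%nat -> 0 <= t n) ->
      sum1 N (fun m => sum1 N (fun n =>
        if Nat.eqb n m then 0 else
          (delta lam (Z.of_nat m) * sqrt (delta lam (Z.of_nat m))) *
          sqrt (delta lam (Z.of_nat n)) * t m * t n /
          (lam (Z.of_nat m) - lam (Z.of_nat n)) ^ 2))
      <= C3 * sum1 N (fun n => t n ^ 2).

Definition CondII (C3 : R) : Prop :=
  forall (M : nat) (x : nat -> R) (tau : nat -> R),
      (1 <= M)%nat ->
      (forall m n : nat, (1 <= m <= M)%nat -> (1 <= n <= M)%nat -> m <> n ->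
         ~ (exists k : Z, x m - x n = IZR k)) ->
      (forall m : nat, (1 <= m <= M)%nat -> 0 <= tau m) ->
      1 / 3 * sum1 M (fun m => dmin M x m ^ 2 * tau m ^ 2)
      + sum1 M (fun m => sum1 M (fun n =>
          if Nat.eqb n m then 0 else
            (dmin M x m * sqrt (dmin M x m)) * sqrt (dmin M x n) *
            tau m * tau n / (sin (PI * (x m - x n))) ^ 2))
      <= C3 / PI ^ 2 * sum1 M (fun m => tau m ^ 2).

Lemma zero_term (b : bool) a tm tn s : (tm = 0 \/ tn = 0) -> (if b then 0 else a * tm * tn / s) = 0.
Proof. intros [H|H]; destruct b; auto; rewrite H; unfold Rdiv; ring. Qed.

Lemma delta_pos lam k : (forall k, lam k < lam (k + 1)%Z) -> 0 < delta lam k.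
Proof. intros Hl. unfold delta. pose proof (Hl k). pose proof (Hl (k - 1)%Z). replace (k - 1 + 1)%Z with k in H0 by lia.
 apply Rmin_glb_lt; lra. Qed.

Lemma dir2 C3 : CondII C3 -> CondI C3.
Proof. intros H2 N lam t HN Hl Ht.
 pose proof PI_RGT_0 as HPI.
 assert (Hmono := lam_mono lam Hl). assert (Hle := lam_le lam Hl).
 set (D := lam (Z.of_nat (S N)) - lam 0%Z).
 assert (HD : 0 < D) by (unfold D; pose proof (Hmono 0%Z (Z.of_nat (S N)) ltac:(lia)); lra).
 set (e := / (4 * D)). assert (He : 0 < e) by (unfold e; apply Rinv_0_lt_compat; lra).
 assert (HeD : e * D = 1/4) by (unfold e; field; lra).
 set (zz := fun j => if Nat.eqb j (S N) then 0%Z else if Nat.eqb j (S (S N)) then Z.of_nat (S N) else Z.of_nat j).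
 set (x := fun j => e * lam (zz j)).
 set (tau := fun j => if Nat.leb j N then t j else 0).
 assert (Fz : forall j, (1 <= j <= S (S N))%nat -> (0 <= zz j <= Z.of_nat (S N))%Z).
 { intros j Hj. unfold zz. destruct (Nat.eqb_spec j (S N)). lia. destruct (Nat.eqb_spec j (S (S N))); lia. }
 assert (Fzid : forall j, (1 <= j <= N)%nat -> zz j = Z.of_nat j).
 { intros j Hj. unfold zz. destruct (Nat.eqb_spec j (S N)). lia. destruct (Nat.eqb_spec j (S (S N))); lia. }
 assert (Fzinj : forall i j, (1 <= i <= S (S N))%nat -> (1 <= j <= S (S N))%nat -> zz i = zz j -> i = j).
 { intros i j Hi Hj. unfold zz. destruct (Nat.eqb_spec i (S N)); destruct (Nat.eqb_spec i (S (S N)));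
   destruct (Nat.eqb_spec j (S N)); destruct (Nat.eqb_spec j (S (S N))); lia. }
 assert (Finj : forall a b, lam a = lam b -> a = b).
 { intros a b E. destruct (Z.lt_trichotomy a b) as [h|[h|h]]; auto; apply Hmono in h; lra. }
 assert (Fb : forall a b, (0 <= a <= Z.of_nat (S N))%Z -> (0 <= b <= Z.of_nat (S N))%Z -> Rabs (lam a - lam b) <= D).
 { intros a b Ha Hb. unfold D. pose proof (Hle 0%Z a ltac:(lia)). pose proof (Hle 0%Z b ltac:(lia)).
   pose proof (Hle a (Z.of_nat (S N)) ltac:(lia)). pose proof (Hle b (Z.of_nat (S N)) ltac:(lia)).
   apply Rabs_le; lra. }
 assert (Fx : forall i j, (1 <= i <= S (S N))%nat -> (1 <= j <= S (S N))%nat -> Rabs (x i - x j) <= 1/4).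
 { intros i j Hi Hj. unfold x. replace (e * lam (zz i) - e * lam (zz j)) with (e * (lam (zz i) - lam (zz j))) by ring.
   rewrite Rabs_mult, Rabs_right by lra. rewrite <- HeD. apply Rmult_le_compat_l. lra. apply Fb; auto. }
 assert (Hdist : forall m n : nat, (1 <= m <= S (S N))%nat -> (1 <= n <= S (S N))%nat -> m <> n ->
         ~ (exists k : Z, x m - x n = IZR k)).
 { intros m n Hm Hn Hmn [k Hk]. pose proof (Fx m n Hm Hn) as B. rewrite Hk in B. assert (B0 : -(1/4) <= IZR k <= 1/4) by (unfold Rabs in B; destruct (Rcase_abs (IZR k)); lra). clear B. rename B0 into B.
   assert (k = 0%Z). { destruct B as [B1 B2]. assert (k < 1)%Z by (apply lt_IZR; simpl; lra).
     assert (-1 < k)%Z by (apply lt_IZR; simpl; lra). lia. }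
   subst k. simpl in Hk. unfold x in Hk. apply Hmn, Fzinj; auto. apply Finj. apply (Rmult_eq_reg_l e); lra. }
 assert (Htau : forall m : nat, (1 <= m <= S (S N))%nat -> 0 <= tau m).
 { intros m Hm. unfold tau. destruct (Nat.leb_spec m N). apply Ht; lia. lra. }
 specialize (H2 (S (S N)) x tau ltac:(lia) Hdist Htau).
 assert (S1nn : 0 <= sum1 (S (S N)) (fun m => dmin (S (S N)) x m ^ 2 * tau m ^ 2)).
 { apply sum1_nonneg. intros. apply Rmult_le_pos; apply pow2_ge_0. }
 assert (T1 : tau (S N) = 0) by (unfold tau; destruct (Nat.leb_spec (S N) N); [lia|reflexivity]).
 assert (T2 : tau (S (S N)) = 0) by (unfold tau; destruct (Nat.leb_spec (S (S N)) N); [lia|reflexivity]).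
 assert (Tid : forall m, (1 <= m <= N)%nat -> tau m = t m) by (intros m Hm; unfold tau; destruct (Nat.leb_spec m N); [reflexivity|lia]).
 assert (EST : sum1 (S (S N)) (fun m => tau m ^ 2) = sum1 N (fun n => t n ^ 2)).
 { rewrite sum1_SS, T1, T2. rewrite (sum1_ext N _ (fun n => t n ^ 2)) by (intros; rewrite Tid; auto). ring. }
 set (G := fun m n => if Nat.eqb n m then 0 else
            (dmin (S (S N)) x m * sqrt (dmin (S (S N)) x m)) * sqrt (dmin (S (S N)) x n) *
            tau m * tau n / (sin (PI * (x m - x n))) ^ 2).
 assert (G0 : forall m n, tau m = 0 \/ tau n = 0 -> G m n = 0) by (intros; unfold G; apply zero_term; auto).
 assert (H2' : 1 / 3 * sum1 (S (S N)) (fun m => dmin (S (S N)) x m ^ 2 * tau m ^ 2)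
   + sum1 (S (S N)) (fun m => sum1 (S (S N)) (fun n => G m n)) <= C3 / PI ^ 2 * sum1 (S (S N)) (fun m => tau m ^ 2)) by exact H2.
 clear H2; rename H2' into H2.
 assert (ESS : sum1 (S (S N)) (fun m => sum1 (S (S N)) (fun n => G m n)) = sum1 N (fun m => sum1 N (fun n => G m n))).
 { rewrite sum1_SS. rewrite (sum1_zero _ (fun n => G (S N) n)) by (intros; apply G0; auto).
   rewrite (sum1_zero _ (fun n => G (S (S N)) n)) by (intros; apply G0; auto).
   rewrite (sum1_ext N _ (fun m => sum1 N (fun n => G m n))). ring.
   intros m Hm. rewrite sum1_SS, (G0 m (S N)), (G0 m (S (S N))) by auto. ring. }
 rewrite ESS, EST in H2.
 set (F := fun m n => if Nat.eqb n m then 0 else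
          (delta lam (Z.of_nat m) * sqrt (delta lam (Z.of_nat m))) *
          sqrt (delta lam (Z.of_nat n)) * t m * t n /
          (lam (Z.of_nat m) - lam (Z.of_nat n)) ^ 2).
 change (sum1 N (fun m => sum1 N (fun n => F m n)) <= C3 * sum1 N (fun n => t n ^ 2)).
 assert (Fd : forall m, (1 <= m <= N)%nat -> e * delta lam (Z.of_nat m) <= dmin (S (S N)) x m).
 { intros m Hm. unfold dmin. apply dmin_ge.
   - assert (delta lam (Z.of_nat m) <= D).
     { unfold delta, D. apply Rle_trans with (lam (Z.of_nat m + 1)%Z - lam (Z.of_nat m)). apply Rmin_r.
       pose proof (Hle (Z.of_nat m + 1)%Z (Z.of_nat (S N)) ltac:(lia)). pose proof (Hle 0%Z (Z.of_nat m) ltac:(lia)). lra. }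
     assert (e * delta lam (Z.of_nat m) <= e * D) by (apply Rmult_le_compat_l; lra). lra.
   - intros n Hn Hnm. rewrite nint_dist_small by (pose proof (Fx n m Hn ltac:(lia)); lra).
     unfold x. rewrite (Fzid m Hm).
     replace (e * lam (zz n) - e * lam (Z.of_nat m)) with (e * (lam (zz n) - lam (Z.of_nat m))) by ring.
     rewrite Rabs_mult, (Rabs_right e) by lra. apply Rmult_le_compat_l. lra.
     assert (zz n <> Z.of_nat m). { intro E. apply Hnm. apply Fzinj; auto. lia. rewrite E, Fzid; auto. }
     unfold delta. destruct (Z_lt_le_dec (zz n) (Z.of_nat m)).
     + pose proof (Hle (zz n) (Z.of_nat m - 1)%Z ltac:(lia)). pose proof (Hmono (zz n) (Z.of_nat m) l).
       rewrite Rabs_left by lra. apply Rle_trans with (lam (Z.of_nat m) - lam (Z.of_nat m - 1)%Z). apply Rmin_l. lra.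
     + pose proof (Hle (Z.of_nat m + 1)%Z (zz n) ltac:(lia)). pose proof (Hmono (Z.of_nat m) (zz n) ltac:(lia)).
       rewrite Rabs_right by lra. apply Rle_trans with (lam (Z.of_nat m + 1)%Z - lam (Z.of_nat m)). apply Rmin_r. lra. }
 assert (FG : forall m n, (1 <= m <= N)%nat -> (1 <= n <= N)%nat -> F m n <= PI^2 * G m n).
 { intros m n Hm Hn. unfold F, G. destruct (Nat.eqb_spec n m). lra.
   rewrite (Tid m Hm), (Tid n Hn).
   assert (Ex : x m - x n = e * (lam (Z.of_nat m) - lam (Z.of_nat n))) by (unfold x; rewrite (Fzid m Hm), (Fzid n Hn); ring).
   rewrite Ex.
   assert (HDn : lam (Z.of_nat m) - lam (Z.of_nat n) <> 0).
   { intro E. apply n0. apply Nat2Z.inj. symmetry. apply Finj. lra. }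
   assert (Hb : Rabs (e * (lam (Z.of_nat m) - lam (Z.of_nat n))) <= 1/4) by (rewrite <- Ex; apply Fx; lia).
   assert (HS : 0 < (sin (PI * (e * (lam (Z.of_nat m) - lam (Z.of_nat n)))))^2).
   { set (w := e * (lam (Z.of_nat m) - lam (Z.of_nat n))) in *.
     assert (w <> 0) by (unfold w; apply Rmult_integral_contrapositive; split; lra).
     assert (sin (PI * w) <> 0).
     { unfold Rabs in Hb. destruct (Rcase_abs w).
       - apply Rlt_not_eq, sin_lt_0_var; nra.
       - apply not_eq_sym, Rlt_not_eq, sin_gt_0; nra. }
     nra. }
   pose proof (term_cmp e (dmin (S (S N)) x m) (dmin (S (S N)) x n) (delta lam (Z.of_nat m)) (delta lam (Z.of_nat n))
     (t m) (t n) (lam (Z.of_nat m) - lam (Z.of_nat n)) _ He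
     (Rlt_le _ _ (delta_pos lam _ Hl)) (Rlt_le _ _ (delta_pos lam _ Hl)) (Fd m Hm) (Fd n Hn) (Ht m Hm) (Ht n Hn) HDn HS
     (sin_sq_le _)) as TC.
   assert (0 < PI^2) by nra.
   apply (Rmult_le_compat_l (PI^2)) in TC; [|lra].
   replace (PI ^ 2 * (delta lam (Z.of_nat m) * sqrt (delta lam (Z.of_nat m)) * sqrt (delta lam (Z.of_nat n)) * t m * t n /
     (lam (Z.of_nat m) - lam (Z.of_nat n)) ^ 2 / PI ^ 2)) with
     (delta lam (Z.of_nat m) * sqrt (delta lam (Z.of_nat m)) * sqrt (delta lam (Z.of_nat n)) * t m * t n /
     (lam (Z.of_nat m) - lam (Z.of_nat n)) ^ 2) in TC by (field; lra).
   exact TC. }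
 assert (sum1 N (fun m => sum1 N (fun n => F m n)) <= PI^2 * sum1 N (fun m => sum1 N (fun n => G m n))).
 { rewrite <- sum1_scal. apply sum1_le. intros m Hm. rewrite <- sum1_scal. apply sum1_le. intros n Hn. auto. }
 assert (PI^2 * sum1 N (fun m => sum1 N (fun n => G m n)) <= C3 * sum1 N (fun n => t n ^ 2)).
 { assert (0 < PI^2) by nra.
   apply Rle_trans with (PI^2 * (C3 / PI^2 * sum1 N (fun n => t n ^ 2))). apply Rmult_le_compat_l; lra.
   right. field. lra. }
 lra.
Qed.

Module SortAux.
Import ssreflect ssrbool ssrfun eqtype ssrnat seq path bigop zify.
Local Open Scope nat_scope.

HB.instance Definition _ := Monoid.isComLaw.Build R 0%R Rplus (fun a b c => esym (Rplus_assoc a b c)) Rplus_comm Rplus_0_l.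

Lemma sum1_big M F : sum1 M F = \big[Rplus/0%R]_(0 <= i < M) F i.+1.
Proof. elim: M => [|M IH]; first by rewrite big_geq. by rewrite big_nat_recr //= IH. Qed.

Lemma sum1_iota M F : sum1 M F = \big[Rplus/0%R]_(i <- iota 1 M) F i.
Proof. rewrite sum1_big. have -> : iota 1 M = index_iota 1 M.+1 by rewrite /index_iota subSS subn0.
 by rewrite big_add1. Qed.

Definition rle (y : nat -> R) (i j : nat) : bool := if Rle_dec (y i) (y j) then true else false.

Lemma sort_exists M (y : nat -> R) :
  (forall i j, le 1 i /\ le i M -> le 1 j /\ le j M -> i <> j -> y i <> y j) ->
  exists p : nat -> nat,
    (forall k, le 1 k /\ le k M -> le 1 (p k) /\ le (p k) M) /\
    (forall k k', le 1 k -> lt k k' -> le k' M -> (y (p k) < y (p k'))%R) /\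
    (forall F : nat -> R, sum1 M (fun k => F (p k)) = sum1 M F).
Proof. move=> Hinj.
 set r := rle y.
 have rtot : total r by move=> i j; rewrite /r /rle; case: Rle_dec; case: Rle_dec => //= *; lra.
 have rtr : transitive r by move=> j i k; rewrite /r /rle; case: Rle_dec; case: Rle_dec => //=; case: Rle_dec => //= *; lra.
 have rrefl : reflexive r by move=> i; rewrite /r /rle; case: Rle_dec => //= *; lra.
 set s := sort r (iota 1 M).
 have Hperm : perm_eq s (iota 1 M) by rewrite /s perm_sort.
 have Hsize : size s = M by rewrite size_sort size_iota.
 have Hsorted : sorted r s := sort_sorted rtot _.
 have Huniq : uniq s by rewrite /s sort_uniq iota_uniq.
 have Hmem : forall k, (k < M)%N -> (1 <= nth 0 s k < M.+1)%N.
 { move=> k Hk. have : nth 0 s k \in iota 1 M by rewrite -(perm_mem Hperm) mem_nth // Hsize.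
   by rewrite mem_iota add1n. }
 exists (fun k => nth 0 s (k - 1)). split; [|split].
 - move=> k [H1 H2]. have := Hmem (k - 1) ltac:(apply/ltP; lia).
   by case/andP => /leP ? /leP ?; lia.
 - move=> k k' H1 H2 H3.
   have Hle : r (nth 0 s (k - 1)) (nth 0 s (k' - 1)).
   { apply: (sorted_leq_nth rtr rrefl) => //; rewrite ?inE ?Hsize. all: try (apply/ltP; lia). all: try (apply/leP; lia). }
   have Hne : nth 0 s (k - 1) <> nth 0 s (k' - 1).
   { move=> /eqP; rewrite nth_uniq // ?Hsize; [move=> /eqP; lia| apply/ltP; lia | apply/ltP; lia]. }
   move: Hle; rewrite /r /rle; case: Rle_dec => // Hle _.
   have Hy : y (nth 0 s (k - 1)) <> y (nth 0 s (k' - 1)).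
   { apply: Hinj => //.
     - have := Hmem (k - 1) ltac:(apply/ltP; lia). by case/andP => /leP ? /leP ?; lia.
     - have := Hmem (k' - 1) ltac:(apply/ltP; lia). by case/andP => /leP ? /leP ?; lia. }
   lra.
 - move=> F. rewrite sum1_big [RHS]sum1_iota -(perm_big _ Hperm) [RHS](big_nth 0) Hsize.
   apply: eq_bigr => i _. by rewrite subn1.
Qed.
End SortAux.

Definition Pz (M : nat) (p : nat -> nat) (z : Z) : nat := p (S (Z.to_nat ((z - 1) mod Z.of_nat M))).
Definition lamb (M : nat) (y : nat -> R) (p : nat -> nat) (z : Z) : R := y (Pz M p z) + IZR ((z - 1) / Z.of_nat M).

Lemma lamb_repr M y p a k : (k < M)%nat ->
  Pz M p (a * Z.of_nat M + Z.of_nat k + 1) = p (S k) /\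
  lamb M y p (a * Z.of_nat M + Z.of_nat k + 1) = y (p (S k)) + IZR a.
Proof. intros Hk.
 assert (E1 : Z.of_nat k = ((a * Z.of_nat M + Z.of_nat k + 1 - 1) mod Z.of_nat M)%Z)
   by (apply (Z.mod_unique_pos _ _ a); lia).
 assert (E2 : a = ((a * Z.of_nat M + Z.of_nat k + 1 - 1) / Z.of_nat M)%Z)
   by (apply (Z.div_unique_pos _ _ _ (Z.of_nat k)); lia).
 unfold lamb, Pz. rewrite <- E1, <- E2, Nat2Z.id. split; reflexivity. Qed.

Lemma lamb_decomp M z : (1 <= M)%nat -> exists a k, (k < M)%nat /\ z = (a * Z.of_nat M + Z.of_nat k + 1)%Z.
Proof. intros HM. exists ((z - 1) / Z.of_nat M)%Z, (Z.to_nat ((z - 1) mod Z.of_nat M)).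
 pose proof (Z.mod_pos_bound (z - 1) (Z.of_nat M) ltac:(lia)).
 pose proof (Z.div_mod (z - 1) (Z.of_nat M) ltac:(lia)). split; lia. Qed.

Lemma Pz_range M p z : (1 <= M)%nat -> (forall k, (1 <= k <= M)%nat -> (1 <= p k <= M)%nat) -> (1 <= Pz M p z <= M)%nat.
Proof. intros HM HP. unfold Pz. apply HP. pose proof (Z.mod_pos_bound (z - 1) (Z.of_nat M) ltac:(lia)). lia. Qed.

Lemma lamb_incr M y p : (1 <= M)%nat ->
  (forall k, (1 <= k <= M)%nat -> (1 <= p k <= M)%nat) ->
  (forall m, 0 <= y m < 1) ->
  (forall k k', (1 <= k)%nat -> (k < k')%nat -> (k' <= M)%nat -> y (p k) < y (p k')) ->
  forall z, lamb M y p z < lamb M y p (z + 1)%Z.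
Proof. intros HM HP Hy Hmono z. destruct (lamb_decomp M z HM) as [a [k [Hk Hz]]]. subst z.
 destruct (lamb_repr M y p a k Hk) as [_ E]. rewrite E.
 destruct (Nat.lt_ge_cases (S k) M).
 - replace (a * Z.of_nat M + Z.of_nat k + 1 + 1)%Z with (a * Z.of_nat M + Z.of_nat (S k) + 1)%Z by lia.
   destruct (lamb_repr M y p a (S k) H) as [_ E']. rewrite E'. pose proof (Hmono (S k) (S (S k)) ltac:(lia) ltac:(lia) ltac:(lia)). lra.
 - replace (a * Z.of_nat M + Z.of_nat k + 1 + 1)%Z with ((a + 1) * Z.of_nat M + Z.of_nat 0 + 1)%Z by lia.
   destruct (lamb_repr M y p (a + 1) 0 ltac:(lia)) as [_ E']. rewrite E', plus_IZR.
   pose proof (Hy (p (S k))). pose proof (Hy (p 1%nat)). lra. Qed.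

Lemma inv_sq_nonneg x : 0 <= 1 / x^2.
Proof. destruct (Req_dec x 0). subst. replace (0^2) with 0 by ring. unfold Rdiv. rewrite Rinv_0. lra.
 apply Rlt_le, Rdiv_lt_0_compat. lra. nra. Qed.

Lemma pow2_ge1 q : (1 <= 2^q)%nat.
Proof. induction q; simpl; lia. Qed.

Lemma IZR_of_nat m : IZR (Z.of_nat m) = INR m.
Proof. symmetry; apply INR_IZR_INZ. Qed.

Lemma sin_sq_shift v k : (sin (v + IZR k * PI))^2 = (sin v)^2.
Proof. rewrite sin_plus. rewrite (sin_eq_0_1 (IZR k * PI)) by (exists k; reflexivity).
 pose proof (sin2_cos2 (IZR k * PI)) as E. rewrite (sin_eq_0_1 (IZR k * PI)) in E by (exists k; reflexivity).
 unfold Rsqr in E. replace ((sin v * cos (IZR k * PI) + cos v * 0)^2) with ((sin v)^2 * (cos (IZR k * PI) * cos (IZR k * PI))) by ring.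
 replace (cos (IZR k * PI) * cos (IZR k * PI)) with 1 by lra. ring. Qed.

Lemma pair_bound q u : -1 < u < 1 -> u <> 0 ->
  PI^2 / (sin (PI * u))^2 - 3 * PI^2 / 2^q <=
  1 / (u + IZR 0)^2 + sum0 (2^(S q))%nat (fun j => 1 / (u + IZR (Z.of_nat (S j)))^2)
  + sum0 (2^(S q))%nat (fun j => 1 / (u + IZR (- Z.of_nat (S j)))^2).
Proof. intros Hu Hu0. pose proof (pow2_ge1 q) as Hn. assert (HnJ : (2^q <= 2^(S q))%nat) by (simpl; lia).
 set (J := (2^(S q))%nat) in *. set (n := (2^q)%nat) in *.
 rewrite (sum0_ext _ (fun j => 1 / (u + IZR (Z.of_nat (S j)))^2) (fun j => 1 / (u + INR (S j))^2)) by (intros; rewrite IZR_of_nat; reflexivity).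
 rewrite (sum0_ext _ (fun j => 1 / (u + IZR (- Z.of_nat (S j)))^2) (fun j => 1 / (u - INR (S j))^2)) by (intros; rewrite Ropp_Ropp_IZR, IZR_of_nat; f_equal; f_equal; ring).
 replace (u + IZR 0) with u by (simpl; ring).
 assert (HA : forall m, (m <= J)%nat -> sum0 m (fun j => 1 / (u + INR (S j))^2) <= sum0 J (fun j => 1 / (u + INR (S j))^2))
   by (intros; apply sum0_mono_n; auto; intros; apply inv_sq_nonneg).
 assert (HB : forall m, (m <= J)%nat -> sum0 m (fun j => 1 / (u - INR (S j))^2) <= sum0 J (fun j => 1 / (u - INR (S j))^2))
   by (intros; apply sum0_mono_n; auto; intros; apply inv_sq_nonneg).
 destruct (Rlt_le_dec 0 u) as [Hp|Hneg].
 - pose proof (cross_bound q u ltac:(lra)) as C. fold n in C.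
   replace n with (S (n - 1)) in C at 1 by lia. rewrite sum0_shift1 in C.
   change (INR 0) with 0 in C. replace (u + 0) with u in C by ring.
   pose proof (HA (n - 1)%nat ltac:(lia)). pose proof (HB n ltac:(lia)). lra.
 - assert (Hu' : 0 < u + 1 < 1) by (split; [lra|]; destruct (Req_dec u 0); [contradiction|lra]).
   pose proof (cross_bound q (u + 1) Hu') as C. fold n in C.
   replace (PI * (u + 1)) with (PI * u + PI) in C by ring. rewrite neg_sin in C.
   replace ((- sin (PI * u))^2) with ((sin (PI * u))^2) in C by ring.
   rewrite (sum0_ext n (fun j => 1 / (u + 1 + INR j)^2) (fun j => 1 / (u + INR (S j))^2)) in C by (intros; rewrite S_INR; f_equal; f_equal; ring).
   rewrite (sum0_ext n (fun j => 1 / (u + 1 - INR (S j))^2) (fun j => 1 / (u - INR j)^2)) in C by (intros; rewrite S_INR; f_equal; f_equal; ring).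
   replace n with (S (n - 1)) in C at 2 by lia. rewrite sum0_shift1 in C. change (INR 0) with 0 in C. replace (u - 0) with u in C by ring.
   pose proof (HA n ltac:(lia)). pose proof (HB (n - 1)%nat ltac:(lia)). lra. Qed.

Lemma self_bound q :
  PI^2 / 3 - 3 * PI^2 / 2^q <=
  sum0 (2^(S q))%nat (fun j => 1 / (IZR (Z.of_nat (S j)))^2)
  + sum0 (2^(S q))%nat (fun j => 1 / (IZR (- Z.of_nat (S j)))^2).
Proof. rewrite (sum0_ext _ (fun j => 1 / (IZR (Z.of_nat (S j)))^2) (fun j => 1 / (INR (S j))^2)) by (intros; rewrite IZR_of_nat; reflexivity).
 rewrite (sum0_ext _ (fun j => 1 / (IZR (- Z.of_nat (S j)))^2) (fun j => 1 / (INR (S j))^2)) by (intros; rewrite Ropp_Ropp_IZR, IZR_of_nat; f_equal; ring).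
 pose proof (E_bound (S q)) as E. assert (0 < 2^q) by (apply pow_lt; lra). pose proof PI_RGT_0.
 replace (3 * PI^2 / 2 / 2^(S q)) with (3 * PI^2 / 2^q / 4) in E by (simpl; field; lra).
 assert (0 <= 3 * PI^2 / 2^q) by (apply Rle_mult_inv_pos; nra). lra. Qed.

Lemma lhs_reindex K M (F : nat -> nat -> R) :
  sum1 (K * M) (fun i => sum1 (K * M) (fun i' => F i i')) =
  sum0 M (fun k => sum0 M (fun l => sum0 K (fun a => sum0 K (fun b => F (S (a * M + k)) (S (b * M + l)))))).
Proof. rewrite sum1_sum0, sum0_blocks.
 rewrite (sum0_ext K _ (fun a => sum0 M (fun k => sum0 M (fun l => sum0 K (fun b => F (S (a * M + k)) (S (b * M + l))))))).
 2:{ intros a _. apply sum0_ext. intros k _. rewrite sum1_sum0, sum0_blocks. apply sum0_swap. }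
 rewrite sum0_swap. apply sum0_ext. intros k _. apply sum0_swap. Qed.

Lemma sum1_plus n f g : sum1 n (fun i => f i + g i) = sum1 n f + sum1 n g.
Proof. induction n; simpl; [ring|rewrite IHn; ring]. Qed.

Lemma sum1_spike n m c f : (1 <= m <= n)%nat ->
  sum1 n (fun i => if Nat.eqb i m then c else f i) = c + sum1 n (fun i => if Nat.eqb i m then 0 else f i).
Proof. induction n; intros H; cbn [sum1]. lia.
 destruct (Nat.eq_dec m (S n)). subst. rewrite Nat.eqb_refl.
 rewrite !(sum1_ext n (fun i => if Nat.eqb i (S n) then _ else f i) f) by (intros i Hi; destruct (Nat.eqb_spec i (S n)); [lia|reflexivity]). ring.
 rewrite IHn by lia. destruct (Nat.eqb_spec (S n) m); [lia|]. ring. Qed.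

Lemma perm2 M (p : nat -> nat) (G : nat -> nat -> R) :
  (forall F : nat -> R, sum1 M (fun k => F (p k)) = sum1 M F) ->
  sum0 M (fun k => sum0 M (fun l => G (p (S k)) (p (S l)))) = sum1 M (fun m => sum1 M (fun n => G m n)).
Proof. intros HP.
 rewrite (sum0_ext M _ (fun k => sum1 M (fun n => G (p (S k)) n))).
 2:{ intros k _. rewrite <- (HP (fun n => G (p (S k)) n)). rewrite sum1_sum0. reflexivity. }
 rewrite <- (HP (fun m => sum1 M (fun n => G m n))). rewrite sum1_sum0. reflexivity. Qed.

Lemma mono_term d D d' D' s s' X : 0 <= d <= D -> 0 <= d' <= D' -> 0 <= s -> 0 <= s' -> 0 <= X ->
  d * sqrt d * sqrt d' * s * s' * X <= D * sqrt D * sqrt D' * s * s' * X.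
Proof. intros [H1 H2] [H3 H4] Hs Hs' HX.
 assert (sqrt d <= sqrt D) by (apply sqrt_le_1_alt; auto). assert (sqrt d' <= sqrt D') by (apply sqrt_le_1_alt; auto).
 pose proof (sqrt_pos d). pose proof (sqrt_pos d').
 apply Rmult_le_compat_r; auto. apply Rmult_le_compat_r; auto. apply Rmult_le_compat_r; auto.
 apply Rmult_le_compat; auto. apply Rmult_le_pos; auto. apply Rmult_le_compat; auto. Qed.

Lemma lim_K X Y J : 0 <= Y -> (forall K, (1 <= K)%nat -> INR (K - J) * X <= INR K * Y) -> X <= Y.
Proof. intros HY H. destruct (Rle_dec X Y) as [h|h]; auto. exfalso.
 destruct (INR_unbounded (INR J * Y / (X - Y))) as [m Hm].
 specialize (H (J + m + 1)%nat ltac:(lia)). replace (J + m + 1 - J)%nat with (m + 1)%nat in H by lia.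
 rewrite !plus_INR in H. simpl INR in H.
 assert (INR m * (X - Y) > INR J * Y). { apply (Rmult_gt_compat_r (X - Y)) in Hm; [|lra].
   replace (INR J * Y / (X - Y) * (X - Y)) with (INR J * Y) in Hm by (field; lra). lra. }
 nra. Qed.

Lemma INR_lt_pow2 n : INR n < 2^n.
Proof. induction n. simpl; lra. rewrite S_INR. simpl. assert (1 <= 2^n) by (apply pow_R1_Rle; lra). lra. Qed.

Lemma lim_q Z Y c : 0 <= c -> (forall q, Z - c / 2^q <= Y) -> Z <= Y.
Proof. intros Hc H. destruct (Rle_dec Z Y) as [h|h]; auto. exfalso.
 destruct (INR_unbounded (c / (Z - Y))) as [q Hq]. specialize (H q). pose proof (INR_lt_pow2 q).
 assert (0 < 2^q) by (apply pow_lt; lra).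
 assert (c / 2^q < Z - Y). { apply (Rmult_lt_reg_r (2^q)); auto. replace (c / 2^q * 2^q) with c by (field; lra).
   apply (Rmult_gt_compat_r (Z - Y)) in Hq; [|lra]. replace (c / (Z - Y) * (Z - Y)) with c in Hq by (field; lra). nra. }
 lra. Qed.

Lemma dir1 C3 : 0 < C3 -> CondI C3 -> CondII C3.
Proof. intros hC3 H1 M x tau HM Hdist Htau.
 pose proof PI_RGT_0 as HPI.
 set (y := fun m => frac_part (x m)).
 assert (Hy : forall m, 0 <= y m < 1) by (intros; unfold y; pose proof (base_fp (x m)); lra).
 assert (Hxy : forall m, x m = y m + IZR (Int_part (x m))) by (intros; unfold y; pose proof (Rplus_Int_part_frac_part (x m)); lra).
 assert (Hyinj : forall i j, le 1 i /\ le i M -> le 1 j /\ le j M -> i <> j -> y i <> y j).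
 { intros i j Hi Hj Hij E. apply (Hdist i j Hi Hj Hij). exists (Int_part (x i) - Int_part (x j))%Z.
   rewrite minus_IZR. pose proof (Hxy i). pose proof (Hxy j). lra. }
 destruct (SortAux.sort_exists M y Hyinj) as [p [HP1 [HP2 HP3]]].
 set (lam := lamb M y p).
 assert (Hl : forall k, lam k < lam (k + 1)%Z) by (apply lamb_incr; auto).
 assert (HPz : forall z, (1 <= Pz M p z <= M)%nat) by (intros; apply Pz_range; auto).
 assert (Hgap : forall z, dmin M x (Pz M p z) <= lam (z + 1)%Z - lam z /\ dmin M x (Pz M p (z + 1)) <= lam (z + 1)%Z - lam z).
 { intros z. set (m := Pz M p z). set (n := Pz M p (z + 1)).
   set (k := ((z + 1 - 1) / Z.of_nat M - (z - 1) / Z.of_nat M - Int_part (x n) + Int_part (x m))%Z).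
   assert (E : lam (z + 1)%Z - lam z = x n - x m + IZR k).
   { unfold lam, lamb. fold m n. unfold k. rewrite ?plus_IZR, ?minus_IZR, ?plus_IZR, ?minus_IZR.
     pose proof (Hxy n). pose proof (Hxy m). lra. }
   pose proof (Hl z) as Hlz0. assert (Hlz : 0 < x n - x m + IZR k) by (rewrite <- E; lra). rewrite E. clear Hlz0.
   destruct (Nat.eq_dec n m) as [Enm|Enm].
   - rewrite Enm in *. replace (x m - x m + IZR k) with (IZR k) in * by ring.
     assert (1 <= IZR k) by (apply IZR_le; apply lt_IZR in Hlz; lia).
     pose proof (dmin_le_1 x m M). unfold dmin. lra.
   - assert (Hn : (1 <= n <= M)%nat) by apply HPz. assert (Hm : (1 <= m <= M)%nat) by apply HPz.
     split.
     + pose proof (nint_dist_le_shift (x n - x m) k). rewrite Rabs_right in H by lra.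
       pose proof (dmin_le x m M n Hn Enm). unfold dmin. lra.
     + pose proof (nint_dist_le_shift (x m - x n) (- k)). rewrite Ropp_Ropp_IZR in H.
       replace (x m - x n + - IZR k) with (- (x n - x m + IZR k)) in H by ring. rewrite Rabs_Ropp, Rabs_right in H by lra.
       pose proof (dmin_le x n M m Hm (not_eq_sym Enm)). unfold dmin. lra. }
 assert (Hdelta : forall z, dmin M x (Pz M p z) <= delta lam z).
 { intros z. unfold delta. apply Rmin_glb. pose proof (proj2 (Hgap (z - 1)%Z)) as G. replace (z - 1 + 1)%Z with z in G by lia. exact G.
   apply (proj1 (Hgap z)). }
 set (W := fun m n => dmin M x m * sqrt (dmin M x m) * sqrt (dmin M x n) * tau m * tau n).
 assert (HW : forall m n, (1 <= m <= M)%nat -> (1 <= n <= M)%nat -> 0 <= W m n).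
 { intros m n Hm Hn. unfold W. pose proof (dmin_nonneg M x m). pose proof (sqrt_pos (dmin M x m)).
   pose proof (sqrt_pos (dmin M x n)). pose proof (Htau m Hm). pose proof (Htau n Hn).
   repeat apply Rmult_le_pos; auto. }
 set (u := fun k l => y (p (S k)) - y (p (S l))).
 set (h := fun k l (j : Z) => W (p (S k)) (p (S l)) *
            (if andb (Nat.eqb k l) (Z.eqb j 0) then 0 else 1 / (u k l + IZR j)^2)).
 set (T' := fun m n => if Nat.eqb n m then W m m * (PI^2/3) else W m n * (PI^2 / (sin (PI * (x m - x n)))^2)).
 set (Ssum := sum1 M (fun m => tau m ^ 2)).
 set (Wsum := sum1 M (fun m => sum1 M (fun n => W m n))).
 assert (HS : 0 <= Ssum) by (apply sum1_nonneg; intros; apply pow2_ge_0).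
 assert (HWs : 0 <= Wsum) by (apply sum1_nonneg; intros; apply sum1_nonneg; intros; apply HW; auto).
 assert (Main : forall q K, (1 <= K)%nat ->
   INR (K - 2^(S q)) * (sum1 M (fun m => sum1 M (fun n => T' m n)) - 3 * PI^2 / 2^q * Wsum) <= INR K * (C3 * Ssum)).
 { intros q K HK. set (J := (2^(S q))%nat). set (c := 3 * PI^2 / 2^q).
   set (t := fun i : nat => tau (Pz M p (Z.of_nat i))).
   assert (Ht : forall n, (1 <= n <= K * M)%nat -> 0 <= t n) by (intros; apply Htau, HPz).
   pose proof (H1 (K * M)%nat lam t ltac:(nia) Hl Ht) as HI.
   set (Fi := fun m n => if Nat.eqb n m then 0 else
          (delta lam (Z.of_nat m) * sqrt (delta lam (Z.of_nat m))) *
          sqrt (delta lam (Z.of_nat n)) * t m * t n /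
          (lam (Z.of_nat m) - lam (Z.of_nat n)) ^ 2).
   assert (HI' : sum1 (K * M) (fun m => sum1 (K * M) (fun n => Fi m n)) <= C3 * sum1 (K * M) (fun n => t n ^ 2)) by exact HI.
   clear HI. rewrite lhs_reindex in HI'.
   assert (Hrep : forall a k, (k < M)%nat -> Pz M p (Z.of_nat (S (a * M + k))) = p (S k) /\
             lam (Z.of_nat (S (a * M + k))) = y (p (S k)) + IZR (Z.of_nat a)).
   { intros a k Hk. replace (Z.of_nat (S (a * M + k))) with (Z.of_nat a * Z.of_nat M + Z.of_nat k + 1)%Z by lia.
     apply lamb_repr; auto. }
   assert (Hts : sum1 (K * M) (fun n => t n ^ 2) = INR K * Ssum).
   { rewrite sum1_sum0, sum0_blocks.
     rewrite (sum0_ext K _ (fun _ => Ssum)). apply sum0_const.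
     intros a Ha. rewrite (sum0_ext M _ (fun k => tau (p (S k)) ^ 2)).
     - unfold Ssum. rewrite <- HP3. rewrite sum1_sum0. reflexivity.
     - intros k Hk. unfold t. rewrite (proj1 (Hrep a k Hk)). reflexivity. }
   rewrite Hts in HI'. replace (C3 * (INR K * Ssum)) with (INR K * (C3 * Ssum)) in HI' by ring.
   assert (Hterm : forall k l a b, (k < M)%nat -> (l < M)%nat ->
             h k l (Z.of_nat a - Z.of_nat b)%Z <= Fi (S (a * M + k)) (S (b * M + l))).
   { intros k l a b Hk Hl'. destruct (Hrep a k Hk) as [Pa La]. destruct (Hrep b l Hl') as [Pb Lb].
     unfold Fi, h.
     destruct (Nat.eqb_spec (S (b * M + l)) (S (a * M + k))) as [E|E].
     - assert (b = a) as E2.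
       { destruct (Nat.lt_trichotomy a b) as [h1|[h1|h1]]; auto.
         - assert ((a + 1) * M <= b * M)%nat by (apply Nat.mul_le_mono_r; lia). lia.
         - assert ((b + 1) * M <= a * M)%nat by (apply Nat.mul_le_mono_r; lia). lia. }
       subst b. assert (l = k) as E1 by lia. subst l. rewrite Nat.eqb_refl, Z.sub_diag. simpl. rewrite Rmult_0_r. lra.
     - assert (Hnot : andb (Nat.eqb k l) (Z.eqb (Z.of_nat a - Z.of_nat b) 0) = false).
       { destruct (Nat.eqb_spec k l), (Z.eqb_spec (Z.of_nat a - Z.of_nat b) 0); simpl; auto. exfalso; apply E. subst l. f_equal. f_equal. f_equal. lia. }
       rewrite Hnot. unfold t. rewrite Pa, Pb, La, Lb.
       replace (y (p (S k)) + IZR (Z.of_nat a) - (y (p (S l)) + IZR (Z.of_nat b))) with (u k l + IZR (Z.of_nat a - Z.of_nat b))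
         by (unfold u; rewrite minus_IZR; ring).
       pose proof (Hdelta (Z.of_nat (S (a * M + k)))) as D1. rewrite Pa in D1.
       pose proof (Hdelta (Z.of_nat (S (b * M + l)))) as D2. rewrite Pb in D2.
       unfold W. unfold Rdiv at 2.
       replace (/ (u k l + IZR (Z.of_nat a - Z.of_nat b)) ^ 2) with (1 / (u k l + IZR (Z.of_nat a - Z.of_nat b)) ^ 2) by (unfold Rdiv; ring).
       apply mono_term; auto. split; auto; apply dmin_nonneg. split; auto; apply dmin_nonneg.
       apply Htau, HP1; lia. apply Htau, HP1; lia. apply inv_sq_nonneg. }
   assert (Hsq : forall k l, (k < M)%nat -> (l < M)%nat ->
      INR (K - J) * (h k l 0%Z + sum0 J (fun j => h k l (Z.of_nat (S j))) + sum0 J (fun j => h k l (- Z.of_nat (S j))%Z))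
      <= sum0 K (fun a => sum0 K (fun b => Fi (S (a * M + k)) (S (b * M + l))))).
   { intros k l Hk Hl'. eapply Rle_trans. apply square_bound.
     - intros z. unfold h. apply Rmult_le_pos. apply HW; apply HP1; lia.
       destruct (_ && _)%bool. lra. apply inv_sq_nonneg.
     - apply sum0_le; intros a Ha; apply sum0_le; intros b Hb. apply Hterm; auto. }
   assert (HB : forall k l, (k < M)%nat -> (l < M)%nat ->
      T' (p (S k)) (p (S l)) - c * W (p (S k)) (p (S l)) <=
      h k l 0%Z + sum0 J (fun j => h k l (Z.of_nat (S j))) + sum0 J (fun j => h k l (- Z.of_nat (S j))%Z)).
   { intros k l Hk Hl'. set (w := W (p (S k)) (p (S l))).
     assert (Hw : 0 <= w) by (apply HW; apply HP1; lia).
     destruct (Nat.eq_dec k l) as [Ekl|Ekl].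
     - subst l. unfold T'. rewrite Nat.eqb_refl.
       assert (Hh0 : h k k 0%Z = 0) by (unfold h; rewrite Nat.eqb_refl; simpl; ring).
       assert (Hh1 : forall j, h k k (Z.of_nat (S j)) = w * (1 / (IZR (Z.of_nat (S j)))^2)).
       { intros j. unfold h. rewrite Nat.eqb_refl. replace (Z.eqb (Z.of_nat (S j)) 0) with false by (symmetry; apply Z.eqb_neq; lia).
         simpl andb. cbv iota. unfold u. fold w. f_equal. f_equal. f_equal. ring. }
       assert (Hh2 : forall j, h k k (- Z.of_nat (S j))%Z = w * (1 / (IZR (- Z.of_nat (S j)))^2)).
       { intros j. unfold h. rewrite Nat.eqb_refl. replace (Z.eqb (- Z.of_nat (S j)) 0) with false by (symmetry; apply Z.eqb_neq; lia).
         simpl andb. cbv iota. unfold u. fold w. f_equal. f_equal. f_equal. ring. }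
       rewrite Hh0, (sum0_ext J (fun j => h k k (Z.of_nat (S j))) _ (fun j _ => Hh1 j)),
         (sum0_ext J (fun j => h k k (- Z.of_nat (S j))%Z) _ (fun j _ => Hh2 j)), !sum0_scal.
       pose proof (self_bound q) as SB. fold c in SB. fold w.
       apply (Rmult_le_compat_l w) in SB; auto. rewrite Rmult_minus_distr_l, Rmult_plus_distr_l in SB. fold J in SB. lra.
     - assert (Hh : forall j, h k l j = w * (1 / (u k l + IZR j)^2)).
       { intros j. unfold h. destruct (Nat.eqb_spec k l); [contradiction|]. reflexivity. }
       assert (Hpk : (1 <= p (S k) <= M)%nat) by (apply HP1; lia).
       assert (Hpl : (1 <= p (S l) <= M)%nat) by (apply HP1; lia).
       assert (Hyne : y (p (S k)) <> y (p (S l))).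
       { destruct (proj1 (Nat.lt_gt_cases k l) Ekl) as [h1|h1].
         - pose proof (HP2 (S k) (S l) ltac:(lia) ltac:(lia) ltac:(lia)). lra.
         - pose proof (HP2 (S l) (S k) ltac:(lia) ltac:(lia) ltac:(lia)). lra. }
       assert (Hpne : p (S l) <> p (S k)) by (intro E; rewrite E in Hyne; contradiction).
       unfold T'. destruct (Nat.eqb_spec (p (S l)) (p (S k))); [contradiction|]. fold w.
       rewrite Hh, (sum0_ext J (fun j => h k l (Z.of_nat (S j))) _ (fun j _ => Hh (Z.of_nat (S j)))),
         (sum0_ext J (fun j => h k l (- Z.of_nat (S j))%Z) _ (fun j _ => Hh (- Z.of_nat (S j))%Z)), !sum0_scal.
       assert (Hu : -1 < u k l < 1) by (unfold u; pose proof (Hy (p (S k))); pose proof (Hy (p (S l))); lra).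
       assert (Hu0 : u k l <> 0) by (unfold u; lra).
       pose proof (pair_bound q (u k l) Hu Hu0) as PB. fold c in PB.
       assert (Es : (sin (PI * u k l))^2 = (sin (PI * (x (p (S k)) - x (p (S l)))))^2).
       { replace (PI * u k l) with (PI * (x (p (S k)) - x (p (S l))) + IZR (Int_part (x (p (S l))) - Int_part (x (p (S k)))) * PI).
         apply sin_sq_shift. unfold u. rewrite minus_IZR. pose proof (Hxy (p (S k))). pose proof (Hxy (p (S l))). nra. }
       rewrite Es in PB. apply (Rmult_le_compat_l w) in PB; auto. rewrite Rmult_minus_distr_l, !Rmult_plus_distr_l in PB. fold J in PB. lra. }
   assert (Hsum : sum1 M (fun m => sum1 M (fun n => T' m n - c * W m n)) =
                  sum1 M (fun m => sum1 M (fun n => T' m n)) - c * Wsum).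
   { rewrite (sum1_ext M _ (fun m => sum1 M (fun n => T' m n) + (- c) * sum1 M (fun n => W m n))).
     rewrite sum1_plus, sum1_scal. unfold Wsum. ring.
     intros m _. rewrite <- sum1_scal, <- sum1_plus. apply sum1_ext. intros; ring. }
   fold c. rewrite <- Hsum. rewrite <- (perm2 M p (fun m n => T' m n - c * W m n) HP3).
   eapply Rle_trans; [|exact HI'].
   rewrite <- sum0_scal. apply sum0_le. intros k Hk. rewrite <- sum0_scal. apply sum0_le. intros l Hl'.
   eapply Rle_trans; [|apply Hsq; auto].
   apply Rmult_le_compat_l. apply pos_INR. apply HB; auto. }
 assert (Hq : forall q, sum1 M (fun m => sum1 M (fun n => T' m n)) - 3 * PI^2 * Wsum / 2^q <= C3 * Ssum).
 { intros q. replace (3 * PI^2 * Wsum / 2^q) with (3 * PI^2 / 2^q * Wsum) by (field; apply pow_nonzero; lra).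
   apply (lim_K _ _ (2^(S q))%nat). apply Rmult_le_pos; lra. intros K HK. apply Main; auto. }
 apply lim_q in Hq; [|apply Rmult_le_pos; [nra|auto]].
 assert (HL : sum1 M (fun m => sum1 M (fun n => T' m n)) = PI^2 * (1 / 3 * sum1 M (fun m => dmin M x m ^ 2 * tau m ^ 2)
      + sum1 M (fun m => sum1 M (fun n =>
          if Nat.eqb n m then 0 else
            (dmin M x m * sqrt (dmin M x m)) * sqrt (dmin M x n) *
            tau m * tau n / (sin (PI * (x m - x n))) ^ 2)))).
 { assert (Em : forall m, (1 <= m <= M)%nat -> sum1 M (fun n => T' m n) =
     PI^2 * (1 / 3 * (dmin M x m ^ 2 * tau m ^ 2) + sum1 M (fun n =>
          if Nat.eqb n m then 0 else
            (dmin M x m * sqrt (dmin M x m)) * sqrt (dmin M x n) *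
            tau m * tau n / (sin (PI * (x m - x n))) ^ 2))).
   { intros m Hm. unfold T'.
     rewrite (sum1_spike M m _ (fun n => W m n * (PI ^ 2 / sin (PI * (x m - x n)) ^ 2)) Hm).
     rewrite Rmult_plus_distr_l. f_equal.
     - unfold W. pose proof (sqrt_sqrt (dmin M x m) (dmin_nonneg M x m)). 
       replace (dmin M x m * sqrt (dmin M x m) * sqrt (dmin M x m) * tau m * tau m) with
         (dmin M x m * (sqrt (dmin M x m) * sqrt (dmin M x m)) * tau m * tau m) by ring.
       rewrite H. field.
     - rewrite <- sum1_scal. apply sum1_ext. intros n Hn. destruct (Nat.eqb n m). ring. unfold W, Rdiv. ring. }
   rewrite (sum1_ext M _ _ Em). rewrite sum1_scal, sum1_plus, sum1_scal. reflexivity. }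
 rewrite HL in Hq. assert (0 < PI^2) by nra.
 apply (Rmult_le_reg_l (PI^2)); auto. replace (PI^2 * (C3 / PI^2 * Ssum)) with (C3 * Ssum) by (field; lra).
 exact Hq.
Qed.

Theorem lemma7 (C3 : R) (hC3 : 0 < C3) :
  (forall (N : nat) (lam : Z -> R) (t : nat -> R),
      (1 <= N)%nat ->
      (forall k : Z, lam k < lam (k + 1)%Z) ->
      (forall n : nat, (1 <= n <= N)%nat -> 0 <= t n) ->
      sum1 N (fun m => sum1 N (fun n =>
        if Nat.eqb n m then 0 else
          (delta lam (Z.of_nat m) * sqrt (delta lam (Z.of_nat m))) *
          sqrt (delta lam (Z.of_nat n)) * t m * t n /
          (lam (Z.of_nat m) - lam (Z.of_nat n)) ^ 2))
      <= C3 * sum1 N (fun n => t n ^ 2))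
  <->
  (forall (M : nat) (x : nat -> R) (tau : nat -> R),
      (1 <= M)%nat ->
      (forall m n : nat, (1 <= m <= M)%nat -> (1 <= n <= M)%nat -> m <> n ->
         ~ (exists k : Z, x m - x n = IZR k)) ->
      (forall m : nat, (1 <= m <= M)%nat -> 0 <= tau m) ->
      1 / 3 * sum1 M (fun m => dmin M x m ^ 2 * tau m ^ 2)
      + sum1 M (fun m => sum1 M (fun n =>
          if Nat.eqb n m then 0 else
            (dmin M x m * sqrt (dmin M x m)) * sqrt (dmin M x n) *
            tau m * tau n / (sin (PI * (x m - x n))) ^ 2))
      <= C3 / PI ^ 2 * sum1 M (fun m => tau m ^ 2)).
Proof.
  split.
  - intros H. exact (dir1 C3 hC3 H).
  - intros H. exact (dir2 C3 H).
Qed.
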